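(* Fix $\epsilon>0$ and suppose that, along a run of the RD-Tracking-TMCTS sampling rule, there exists a positive integer $t_0$ such that $|w^{s_0}_\ell(\hat{\bm{\mu}}(t))-w^{s_0}_\ell(\bm{\mu})|\le\epsilon$ for all $t\ge t_0$ and all $\ell\in\mathcal{L}(\mathcal{T})$. Then there exists a positive integer $t_1\ge t_0$ such that \[\max_{\ell\in\mathcal{L}(\mathcal{T})}\Big|\frac{N_\ell(t)}{t}-w^{s_0}_\ell(\bm{\mu})\Big|\le2(|\mathcal{L}(\mathcal{T})|-1)\epsilon\quad\text{for all }t\ge t_1.\]
   Context: $\mathcal{T}$: finite rooted tree with root $s_0$, children $\mathcal{C}(s)$, leaves $\mathcal{L}(\mathcal{T})$, $\mathcal{D}(s)$ leaves descending from $s$; internal labels $L(s)\in\{\text{MAX},\text{MIN}\}$. $X\subseteq\mathbb{R}$ mean-parameter set of a one-parameter exponential family, $d(x,y)$ KL divergence, threshold $\theta\in X$. $V_s(\bm{\lambda})=\lambda_s$ at leaves, max/min of children's values at MAX/MIN nodes; $a_s=$'win' iff $V_s\ge\theta$. For any mean vector $\bm{\nu}$ the recursive weights are: $a^*=a_{s_0}(\bm{\nu})$; $P=$MAX, $Q=$MIN if $a^*=$'win', swapped if 'lose'. Leaf $s$: $w^s_s=1$, $d_s=d(\nu_s,\theta)$ if ($a^*=$'win', $\nu_s\ge\theta$) or ($a^*=$'lose', $\nu_s<\theta$), else $0$. $L(s)=P$: $d_s=\max_c d_c$, $c^*(s)\in\arg\max_c d_c$, if $d_s>0$: $w^s=w^{c^*(s)}$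 on $\mathcal{D}(c^*(s))$, $0$ elsewhere. $L(s)=Q$, all $d_c>0$: $d_s=(\sum_c1/d_c)^{-1}$, $w^s_\ell=\frac{w^c_\ell/d_c}{\sum_{c'}1/d_{c'}}$ on $\mathcal{D}(c)$. $L(s)=Q$ otherwise: $d_s=0$. Internal $s$ with $d_s=0$: $\bm{w}^s$ arbitrary probability vector. $\bm{\mu}$ is the true mean vector (so $\bm{w}^{s_0}(\bm{\mu})$ is a fixed probability vector). $N_\ell(t)$ is the number of draws of leaf $\ell$ in rounds $1..t$ and $\hat{\bm{\mu}}(t)$ the vector of empirical means. RD-Tracking-TMCTS sampling rule: draw each leaf once; then at round $t$, if some leaf has $N_\ell(t-1)<\sqrt t-|\mathcal{L}(\mathcal{T})|/2$ select $I(t)\in\arg\min_\ell N_\ell(t-1)$, else $I(t)\in\arg\max_\ell w^{s_0}_\ell(\hat{\bm{\mu}}(t-1))/N_\ell(t-1)$. *)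

(* Defs.v *)
From HB Require Import structures.
From mathcomp Require Import all_boot all_order all_algebra.
From mathcomp Require Import reals.
Set Implicit Arguments. Unset Strict Implicit. Unset Printing Implicit Defensive.
Import Order.TTheory GRing.Theory Num.Theory.
Local Open Scope ring_scope.

Inductive label := MAX | MIN.
Definition label_eqb (a b : label) : bool :=
  match a, b with MAX, MAX | MIN, MIN => true | _, _ => false end.

Inductive tree (K : nat) : Type :=
| Leaf : 'I_K -> tree K
| Node : label -> forall n : nat, ('I_n.+1 -> tree K) -> tree K.
Arguments Leaf {K}.
Arguments Node {K}.

Fixpoint leaves K (t : tree K) : seq 'I_K :=
  match t with
  | Leaf l => [:: l]
  | Node _ n f => flatten [seq leaves (f i) | i <- enum 'I_n.+1]
  end.

Definition wf_tree K (t : tree K) : bool := perm_eq (leaves t) (enum 'I_K).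

Section Weights.
Variables (R : realType) (K : nat).
Variable (d : R -> R -> R).
Variable (theta : R).
Variable (nu : 'I_K -> R).

Fixpoint value (t : tree K) : R :=
  match t with
  | Leaf l => nu l
  | Node MAX n f => \big[Num.max / value (f ord0)]_(i < n.+1) value (f i)
  | Node MIN n f => \big[Num.min / value (f ord0)]_(i < n.+1) value (f i)
  end.

Definition root_win (t : tree K) : bool := theta <= value t.

Variable win : bool.

(* L(s) = P ? (P = MAX if a^* = win, P = MIN if a^* = lose) *)
Definition isP (L : label) : bool := label_eqb L MAX == win.

Fixpoint dval (t : tree K) : R :=
  match t with
  | Leaf l => if (win && (theta <= nu l)) || (~~ win && (nu l < theta))
              then d (nu l) theta else 0
  | Node L n f =>
      if isP L then \big[Num.max / dval (f ord0)]_(i < n.+1) dval (f i)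
      else if [forall i : 'I_n.+1, 0 < dval (f i)]
           then (\sum_(i < n.+1) (dval (f i))^-1)^-1
           else 0
  end.

(* wvalid t w : w is an admissible weight vector w^t (one of the possibly
   several vectors allowed by the recursive definition, which contains
   arbitrary choices: tie-breaking of the argmax and arbitrary probability
   vectors when d_s = 0).  Vectors are indexed by all leaves 'I_K and
   vanish outside D(t). *)
Fixpoint wvalid (t : tree K) (w : 'I_K -> R) : Prop :=
  match t with
  | Leaf l => forall j, w j = (if j == l then 1 else 0)
  | Node L n f =>
      if 0 < dval (Node L n f) then
        (if isP L then
           exists i : 'I_n.+1,
             dval (f i) = dval (Node L n f) /\
             (forall i', dval (f i') <= dval (f i)) /\
             exists wc : 'I_K -> R, wvalid (f i) wc /\
               forall j, w j = (if j \in leaves (f i) then wc j else 0)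
         else
           exists wc : 'I_n.+1 -> 'I_K -> R,
             (forall i, wvalid (f i) (wc i)) /\
             forall j, w j =
               \sum_(i < n.+1)
                  (if j \in leaves (f i)
                   then (wc i j / dval (f i)) / (\sum_(i' < n.+1) (dval (f i'))^-1)
                   else 0))
      else
        (forall j, 0 <= w j) /\ (\sum_j w j = 1) /\
        (forall j, j \notin leaves (Node L n f) -> w j = 0)
  end.
End Weights.

Definition root_weight (R : realType) K (d : R -> R -> R) (theta : R)
  (T : tree K) (nu : 'I_K -> R) (w : 'I_K -> R) : Prop :=
  wvalid d theta nu (root_win theta nu T) T w.

(* A run: I t is the leaf drawn at round t >= 1, Y t the observation at round t. *)
Definition Ncount K (I : nat -> 'I_K) (l : 'I_K) (t : nat) : nat :=
  \sum_(1 <= s < t.+1) (I s == l).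

Definition muhat (R : realType) K (I : nat -> 'I_K) (Y : nat -> R) (t : nat)
  (l : 'I_K) : R :=
  (\sum_(1 <= s < t.+1 | I s == l) Y s) / (Ncount I l t)%:R.

Definition RD_tracking (R : realType) K (W : ('I_K -> R) -> ('I_K -> R))
  (I : nat -> 'I_K) (Y : nat -> R) : Prop :=
  (forall l, Ncount I l K = 1%N) /\
  (forall t : nat, (K < t)%N ->
     ((exists l, (Ncount I l t.-1)%:R < Num.sqrt (t%:R : R) - K%:R / 2) ->
        forall l, (Ncount I (I t) t.-1 <= Ncount I l t.-1)%N) /\
     (~ (exists l, (Ncount I l t.-1)%:R < Num.sqrt (t%:R : R) - K%:R / 2) ->
        forall l, W (muhat I Y t.-1) l / (Ncount I l t.-1)%:R <=
                  W (muhat I Y t.-1) (I t) / (Ncount I (I t) t.-1)%:R)).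

(* Main.v *)
Require Import Defs.
From HB Require Import structures.
From mathcomp Require Import all_boot all_order all_algebra.
From mathcomp Require Import reals.
From mathcomp Require Import lra zify.
From Stdlib Require Import Classical.
Import Order.TTheory GRing.Theory Num.Theory.
Local Open Scope ring_scope.
Lemma wlem (R : realType) (K : nat) (d : R -> R -> R) (theta : R) nu win (t : tree K) :
  forall w, wvalid d theta nu win t w ->
  [/\ \sum_j w j = 1, forall j, 0 <= w j & forall j, j \notin leaves t -> w j = 0].
Proof.
elim: t => [l | L n f IH] w /=.
  move=> hw; split.
  - rewrite (eq_bigr _ (fun j _ => hw j)) -big_mkcond /= big_pred1_eq //.
  - by move=> j; rewrite hw; case: (j == l).
  - by move=> j; rewrite inE hw => /negbTE ->.
have memN : forall j i, j \notin flatten [seq leaves (f i) | i <- enum 'I_n.+1] ->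
   j \notin leaves (f i).
  move=> j i; apply: contra => hj; apply/flatten_mapP; exists i => //.
  by rewrite mem_enum.
case: ifP => hD; last by case=> h1 [h2 h3]; split.
case: ifP => hP.
  case=> i [_ [_ [wc [hwc hw]]]].
  have [s1 p1 z1] := IH i wc hwc.
  split.
  - rewrite -s1; apply: eq_bigr => j _; rewrite hw; case: ifP => // /negbT hj.
    by rewrite z1.
  - by move=> j; rewrite hw; case: ifP.
  - by move=> j /memN hj; rewrite hw (negbTE (hj _)).
move: hD; rewrite hP; case: forallP => [hd _ | _]; last by rewrite ltxx.
case=> wc [hwc hw].
have hS : 0 < \sum_(i' < n.+1) (dval d theta nu win (f i'))^-1.
  rewrite (bigD1 ord0) //= ltr_pwDl ?invr_gt0 // sumr_ge0 // => i _.
  by rewrite invr_ge0 ltW.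
have hw' : forall j, w j = \sum_(i < n.+1) (wc i j / dval d theta nu win (f i)
             / \sum_(i' < n.+1) (dval d theta nu win (f i'))^-1).
  move=> j; rewrite hw; apply: eq_bigr => i _; case: ifP => // /negbT hj.
  by have [_ _ z] := IH i _ (hwc i); rewrite z // !mul0r.
split.
- rewrite (eq_bigr _ (fun j _ => hw' j)) exchange_big /=.
  rewrite -[RHS](divff (lt0r_neq0 hS)) mulr_suml; apply: eq_bigr => i _.
  rewrite -mulr_suml -mulr_suml; have [s _ _] := IH i _ (hwc i).
  by rewrite s mul1r.
- move=> j; rewrite hw' sumr_ge0 // => i _.
  have [_ p _] := IH i _ (hwc i).
  by rewrite divr_ge0 ?(ltW hS) // divr_ge0 // ltW.
- move=> j /memN hj; rewrite hw big1 // => i _; by rewrite (negbTE (hj _)).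
Qed.
Lemma NcountS K (I : nat -> 'I_K) l t : Ncount I l t.+1 = (Ncount I l t + (I t.+1 == l))%N.
Proof. by rewrite /Ncount big_nat_recr. Qed.
Lemma Ncount_le K (I : nat -> 'I_K) l t : (Ncount I l t <= t)%N.
Proof. elim: t => [|t IH]; first by rewrite /Ncount big_geq. by rewrite NcountS; case: (_ == _); rewrite ?addn1 ?addn0 // ltnW. Qed.
Lemma Ncount_mono K (I : nat -> 'I_K) l t k : (Ncount I l t <= Ncount I l (t + k))%N.
Proof. elim: k => [|k IH]; first by rewrite addn0. by rewrite addnS NcountS (leq_trans IH) ?leq_addr. Qed.
Lemma Ncount_sum K (I : nat -> 'I_K) t : (\sum_l Ncount I l t = t)%N.
Proof.
rewrite /Ncount exchange_big /=.
rewrite (eq_bigr (fun _ => 1%N)) ?sum_nat_const_nat ?subn1 ?muln1 //.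
move=> s _; rewrite (bigD1 (I s)) //= eqxx big1 // => l /negbTE.
by rewrite eq_sym => ->.
Qed.
Lemma tree0 (t : tree 0) : False.
Proof. elim: t => [l|L n f IH]; [by case: l | exact: IH ord0]. Qed.

Theorem lemma8 (R : realType) (K : nat) (T : tree K) (d : R -> R -> R)
  (theta : R) (W : ('I_K -> R) -> ('I_K -> R)) (mu : 'I_K -> R)
  (I : nat -> 'I_K) (Y : nat -> R) (eps : R) (t0 : nat) :
  wf_tree T ->
  (forall x y, 0 <= d x y) ->
  (forall nu, root_weight d theta T nu (W nu)) ->
  RD_tracking W I Y ->
  0 < eps -> (0 < t0)%N ->
  (forall t l, (t0 <= t)%N -> `|W (muhat I Y t) l - W mu l| <= eps) ->
  exists t1 : nat, [/\ (0 < t1)%N, (t0 <= t1)%N &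
    forall t, (t1 <= t)%N ->
      \big[Num.max/0]_(l < K) `|(Ncount I l t)%:R / t%:R - W mu l|
        <= 2 * (K%:R - 1) * eps].
Proof.
move=> _ _ hW [hinit hrule] he ht0 hclose.
have hWp nu := @wlem _ _ _ _ _ _ _ _ (hW nu).
case: K T W mu I hinit hrule hclose hW hWp => [T|K T W mu I hinit hrule hclose hW hWp].
  by case: (tree0 T).
have Npos : forall l t, (K.+1 <= t)%N -> (0 < Ncount I l t)%N.
  move=> l t /subnKC <-; by rewrite (leq_trans _ (Ncount_mono _ I l K.+1 _)) // hinit.
have Nsum : forall t, \sum_l (Ncount I l t)%:R = t%:R :> R.
  by move=> t; rewrite -natr_sum Ncount_sum.
case: K T W mu I hinit hrule hclose hW hWp Npos Nsum => [|K] T W mu I hinit hrule hclose hW hWp Npos Nsum.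
  exists t0; split => // t ht.
  rewrite subrr mulr0 mul0r; apply: bigmax_le => // l _.
  rewrite [l]ord1; have [s _ _] := hWp mu; rewrite big_ord1 in s; rewrite s.
  have := Nsum t; rewrite big_ord1 => ->.
  by rewrite divff ?subrr ?normr0 // pnatr_eq0 -lt0n (leq_trans ht0 ht).
set m := (t0 + K.+2)%N.
have key : forall l k, (Ncount I l (m+k))%:R <= (Ncount I l m)%:R
    + (W mu l + eps) * (m+k)%:R + Num.sqrt ((m+k)%:R) + 1.
  move=> l; have [_ wp _] := hWp mu; have wl := wp l.
  have hc : 0 <= W mu l + eps by lra.
  elim=> [|k IH].
    rewrite addn0; have := sqrtr_ge0 (m%:R : R).
    have := mulr_ge0 hc (ler0n R m); lra.
  rewrite addnS NcountS.
  set t := (m + k)%N in IH *.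
  have mon : (W mu l + eps) * t%:R <= (W mu l + eps) * t.+1%:R.
    by rewrite ler_wpM2l // ler_nat.
  have mons : Num.sqrt (t%:R) <= Num.sqrt (t.+1%:R :R) by rewrite ler_sqrt // ler_nat.
  have hNm := ler0n R (Ncount I l m).
  have hct := mulr_ge0 hc (ler0n R t.+1).
  case: eqP => [hI | _]; last by rewrite addn0; lra.
  rewrite natrD /=.
  have htm : (m <= t)%N by rewrite /t leq_addr.
  have [hf hr] := hrule t.+1 (leq_trans (leq_addl t0 _) htm).
  rewrite /= in hf hr.
  case: (classic (exists l0 : 'I_K.+2,
      (Ncount I l0 t)%:R < Num.sqrt (t.+1%:R : R) - K.+2%:R / 2)) => hex.
    have [l0 hl0] := hex; have := hf hex l0; rewrite hI => hle.
    have hK : 0 <= K.+2%:R / 2 :> R by rewrite divr_ge0.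
    have h : (Ncount I l t)%:R <= (Ncount I l0 t)%:R :> R by rewrite ler_nat.
    lra.
  have hr' := hr hex; rewrite hI in hr'.
  set wh := W (muhat I Y t) in hr'.
  have hNl : (Ncount I l t)%:R <= wh l * t%:R.
    rewrite -(Nsum t) mulr_sumr.
    have [s _ _] := hWp (muhat I Y t).
    have -> : (Ncount I l t)%:R = (Ncount I l t)%:R * \sum_j W (muhat I Y t) j :> R by rewrite s mulr1.
    rewrite mulr_sumr; apply: ler_sum => j _.
    have h := hr' j.
    have p1 : 0 < (Ncount I l t)%:R :> R by rewrite ltr0n Npos // (leq_trans (leq_addl t0 _) htm).
    have p2 : 0 < (Ncount I j t)%:R :> R by rewrite ltr0n Npos // (leq_trans (leq_addl t0 _) htm).
    by rewrite ler_pdivrMr // mulrAC ler_pdivlMr // mulrC in h.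
  have := hclose t l (leq_trans (leq_addr _ _) htm).
  rewrite ler_norml => /andP [_ h2]; move: h2; rewrite -/wh => h2.
  have h3 : wh l * t%:R <= (W mu l + eps) * t%:R by rewrite ler_wpM2r //; lra.
  have := sqrtr_ge0 (t.+1%:R : R); lra.
pose X : R := (2 * eps * (m%:R + 1) + 1) / eps ^+ 2.
have hX0 : 0 <= X.
  rewrite /X divr_ge0 ?exprn_ge0 ?(ltW he) //; have := ler0n R m; nra.
have hB := archi_boundP hX0.
set B := Num.Def.archi_bound X in hB.
exists (m + B).+1%N; split => //; first by rewrite /m; lia.
move=> t ht.
have htm : (m <= t)%N by lia.
have htp : 0 < t%:R :> R by rewrite ltr0n; lia.
have hup : forall l, (Ncount I l t)%:R <= (W mu l + 2 * eps) * t%:R.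
  move=> l; have := key l (t - m)%N; rewrite subnKC // => h.
  have hNm : (Ncount I l m)%:R <= m%:R :> R by rewrite ler_nat Ncount_le.
  set s := Num.sqrt (t%:R : R) in h.
  have hs2 : s ^+ 2 = t%:R by rewrite sqr_sqrtr.
  have hs0 : 0 <= s by rewrite sqrtr_ge0.
  have hXt : X <= t%:R.
    apply: (le_trans (ltW hB)); rewrite ler_nat; lia.
  have hE : eps ^+ 2 * X = 2 * eps * (m%:R + 1) + 1.
    by rewrite /X mulrC divfK // expf_neq0 // lt0r_neq0.
  have h1 : 2 * eps * s <= eps ^+ 2 * t%:R + 1.
    have := sqr_ge0 (eps * s - 1); rewrite -hs2; nra.
  have h2 : eps ^+ 2 * X <= eps ^+ 2 * t%:R.
    by rewrite ler_wpM2l // exprn_ge0 // ltW.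
  have h4 : 2 * eps * (m%:R + 1 + s) <= 2 * eps * (eps * t%:R).
    rewrite hE in h2; nra.
  rewrite ler_pM2l in h4; last by rewrite mulr_gt0.
  nra.
have [ws _ _] := hWp mu.
have esum : \sum_l ((Ncount I l t)%:R - W mu l * t%:R) = 0.
  by rewrite sumrB Nsum -mulr_suml ws mul1r subrr.
have hk : 1 <= K.+2%:R - 1 :> R by rewrite -!natr1; have := ler0n R K; lra.
apply: bigmax_le => [|l _].
  by rewrite mulr_ge0 // ?mulr_ge0 // ?ltW //; lra.
set kk := K.+2%:R in hk *.
have hsub : \sum_(k | k != l) ((Ncount I k t)%:R - W mu k * t%:R)
    <= \sum_(k | k != l) (2 * eps * t%:R).
  by apply: ler_sum => k _; have := hup k; lra.
have hc : \sum_(k < K.+2) (2 * eps * t%:R) = 2 * eps * t%:R + \sum_(k | k != l) (2 * eps * t%:R).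
  by rewrite (bigD1 l).
rewrite sumr_const card_ord -[_ *+ K.+2]mulr_natr -/kk in hc.
move: esum; rewrite (bigD1 l) //= => esum.
have hup' := hup l.
have p1 : 0 <= eps * t%:R * (kk - 1 - 1) by apply: mulr_ge0; [apply: mulr_ge0; apply: ltW | lra].
have -> : (Ncount I l t)%:R / t%:R - W mu l = ((Ncount I l t)%:R - W mu l * t%:R) / t%:R.
  by rewrite mulrBl mulfK // lt0r_neq0.
rewrite ler_norml ler_pdivlMr // ler_pdivrMr //; apply/andP; split; lra.
Qed.
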